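(* Let $\mathcal{D}$ and $\mathcal{X}$ be finite sets, $\mathcal{Y}=\{0,1\}$, and let $p_{D,X,Y}$ be a given joint probability mass function on $\mathcal{D}\times\mathcal{X}\times\mathcal{Y}$ (with its marginals and conditionals, e.g. $p_{X,Y}$, $p_{X,Y|D}$, regarded as given). Let $p_{Y_T}$ be a given target distribution on $\mathcal{Y}$, let $\delta:(\mathcal{X}\times\mathcal{Y})^2\to\mathbb{R}_+$ be a distortion function with $\delta((x,y),(x,y))=0$, let $\epsilon_{y,d}$, $\epsilon_{y,d_1,d_2}$, $c_{d,x,y}$ be given thresholds, let $\Delta(\cdot,\cdot)$ be a dissimilarity measure between probability distributions on $\mathcal{X}\times\mathcal{Y}$, and let $J(\cdot,\cdot)$ be a distance function between real numbers (probabilities). Consider the optimization problem over the conditional distribution (randomized mapping) $p_{\hat X,\hat Y|X,Y,D}$ from $\mathcal{D}\times\mathcal{X}\times\mathcal{Y}$ to $\mathcal{X}\times\mathcal{Y}$: \[ \min_{p_{\hat X,\hat Y|X,Y,D}} \Delta\big(p_{\hat X,\hat Y},p_{X,Y}\big) \] subject to (i) $J\big(p_{\hat Y|D}(y|d),p_{Y_T}(y)\big)\le \epsilon_{y,d}$ for all $d\in\mathcal{D}$, $y\in\{0,1\}$; (ii) $\sum_{\hat x,\hat y} p_{\hat X,\hat Y|D,X,Y}(\hat x,\hat y|d,x,y)\,\delta((x,y),(\hat x,\hat y))\le c_{d,x,y}$ for all $(d,x,y)\in\mathcal{D}\times\mathcal{X}\times\mathcal{Y}$; (iii) $p_{\hat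 X,\hat Y|X,Y,D}$ is a valid conditional probability distribution. Here $p_{\hat X,\hat Y}(\hat x,\hat y)=\sum_{d,x,y}p_{D,X,Y}(d,x,y)\,p_{\hat X,\hat Y|D,X,Y}(\hat x,\hat y|d,x,y)$ and $p_{\hat Y|D}(\hat y|d)=\sum_{\hat x}\sum_{x,y}p_{X,Y|D}(x,y|d)\,p_{\hat X,\hat Y|D,X,Y}(\hat x,\hat y|d,x,y)$. Then this problem is a convex (respectively quasiconvex) optimization problem if $\Delta(\cdot,\cdot)$ is convex (respectively quasiconvex) in its first argument with the second fixed and $J(\cdot,\cdot)$ is quasiconvex in its first argument with the second fixed. If constraint (i) is replaced by $J\big(p_{\hat Y|D}(y|d_1),p_{\hat Y|D}(y|d_2)\big)\le\epsilon_{y,d_1,d_2}$ for all $d_1,d_2\in\mathcal{D}$, $y\in\{0,1\}$, then the same conclusion holds provided $\Delta$ is (quasi)convex in its first argument and $J$ is jointly quasiconvex in both arguments.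
   Context: $D$ denotes discriminatory (protected) variables, $X$ other features, $Y$ a binary outcome; $(\hat X,\hat Y)$ is the transformed data obtained by applying the randomized mapping $p_{\hat X,\hat Y|X,Y,D}$ to $(D,X,Y)\sim p_{D,X,Y}$, with $D$ retained unchanged. *)

(* Defs.v *)
From mathcomp Require Import all_boot all_order all_algebra.
Set Implicit Arguments. Unset Strict Implicit. Unset Printing Implicit Defensive.
Import Order.TTheory GRing.Theory Num.Theory.
Local Open Scope ring_scope.

Section Defs.
Variables (R : realFieldType) (D X : finType).

Definition is_pmf_DXY (p : D -> X -> bool -> R) : Prop :=
  (forall d x y, 0 <= p d x y) /\ \sum_(d : D) \sum_(x : X) \sum_(y : bool) p d x y = 1.

Definition is_pmf_XY (q : X -> bool -> R) : Prop :=
  (forall x y, 0 <= q x y) /\ \sum_(x : X) \sum_(y : bool) q x y = 1.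

Definition is_pmf_Y (q : bool -> R) : Prop :=
  (forall y, 0 <= q y) /\ \sum_(y : bool) q y = 1.

(* randomized mapping p_{Xh,Yh | D,X,Y}: M d x y xh yh *)
Definition mapping := D -> X -> bool -> X -> bool -> R.

Definition valid_cond (M : mapping) : Prop :=
  forall d x y, (forall xh yh, 0 <= M d x y xh yh) /\
                \sum_(xh : X) \sum_(yh : bool) M d x y xh yh = 1.

Definition pXY (p : D -> X -> bool -> R) : X -> bool -> R :=
  fun x y => \sum_(d : D) p d x y.

Definition pD (p : D -> X -> bool -> R) (d : D) : R :=
  \sum_(x : X) \sum_(y : bool) p d x y.

(* p_{X,Y|D}(x,y|d); convention: 0 when p_D(d) = 0 (MathComp x / 0 = 0) *)
Definition pXYgD (p : D -> X -> bool -> R) (d : D) (x : X) (y : bool) : R :=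
  p d x y / pD p d.

Definition phat (p : D -> X -> bool -> R) (M : mapping) : X -> bool -> R :=
  fun xh yh => \sum_(d : D) \sum_(x : X) \sum_(y : bool) p d x y * M d x y xh yh.

Definition pYhgD (p : D -> X -> bool -> R) (M : mapping) (yh : bool) (d : D) : R :=
  \sum_(xh : X) \sum_(x : X) \sum_(y : bool) pXYgD p d x y * M d x y xh yh.

Definition constr_i (p : D -> X -> bool -> R) (pYT : bool -> R)
  (J : R -> R -> R) (eps : bool -> D -> R) (M : mapping) : Prop :=
  forall d y, J (pYhgD p M y d) (pYT y) <= eps y d.

Definition constr_i' (p : D -> X -> bool -> R)
  (J : R -> R -> R) (eps2 : bool -> D -> D -> R) (M : mapping) : Prop :=
  forall d1 d2 y, J (pYhgD p M y d1) (pYhgD p M y d2) <= eps2 y d1 d2.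

Definition constr_ii (delta : X * bool -> X * bool -> R) (c : D -> X -> bool -> R)
  (M : mapping) : Prop :=
  forall d x y, \sum_(xh : X) \sum_(yh : bool) M d x y xh yh * delta (x, y) (xh, yh)
                <= c d x y.

Definition mix_map (t : R) (M1 M2 : mapping) : mapping :=
  fun d x y xh yh => t * M1 d x y xh yh + (1 - t) * M2 d x y xh yh.

Definition mix_XY (t : R) (q1 q2 : X -> bool -> R) : X -> bool -> R :=
  fun x y => t * q1 x y + (1 - t) * q2 x y.

Definition convex_set_map (S : mapping -> Prop) : Prop :=
  forall M1 M2 t, S M1 -> S M2 -> 0 <= t <= 1 -> S (mix_map t M1 M2).

Definition convex_on_map (S : mapping -> Prop) (f : mapping -> R) : Prop :=
  forall M1 M2 t, S M1 -> S M2 -> 0 <= t <= 1 ->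
    f (mix_map t M1 M2) <= t * f M1 + (1 - t) * f M2.

Definition quasiconvex_on_map (S : mapping -> Prop) (f : mapping -> R) : Prop :=
  forall M1 M2 t, S M1 -> S M2 -> 0 <= t <= 1 ->
    f (mix_map t M1 M2) <= Num.max (f M1) (f M2).

Definition convex_problem (S : mapping -> Prop) (f : mapping -> R) : Prop :=
  convex_set_map S /\ convex_on_map S f.

Definition quasiconvex_problem (S : mapping -> Prop) (f : mapping -> R) : Prop :=
  convex_set_map S /\ quasiconvex_on_map S f.

Definition Delta_convex1 (Delta : (X -> bool -> R) -> (X -> bool -> R) -> R) : Prop :=
  forall q1 q2 q0 t, is_pmf_XY q1 -> is_pmf_XY q2 -> is_pmf_XY q0 -> 0 <= t <= 1 ->
    Delta (mix_XY t q1 q2) q0 <= t * Delta q1 q0 + (1 - t) * Delta q2 q0.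

Definition Delta_quasiconvex1 (Delta : (X -> bool -> R) -> (X -> bool -> R) -> R) : Prop :=
  forall q1 q2 q0 t, is_pmf_XY q1 -> is_pmf_XY q2 -> is_pmf_XY q0 -> 0 <= t <= 1 ->
    Delta (mix_XY t q1 q2) q0 <= Num.max (Delta q1 q0) (Delta q2 q0).

Definition feasible1 p pYT J eps delta c (M : mapping) : Prop :=
  constr_i p pYT J eps M /\ constr_ii delta c M /\ valid_cond M.

Definition feasible2 p J eps2 delta c (M : mapping) : Prop :=
  constr_i' p J eps2 M /\ constr_ii delta c M /\ valid_cond M.

Definition objective (Delta : (X -> bool -> R) -> (X -> bool -> R) -> R) p (M : mapping) : R :=
  Delta (phat p M) (pXY p).

End Defs.

Definition J_quasiconvex1 (R : realFieldType) (J : R -> R -> R) : Prop :=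
  forall a1 a2 b t, 0 <= t <= 1 ->
    J (t * a1 + (1 - t) * a2) b <= Num.max (J a1 b) (J a2 b).

Definition J_quasiconvex_joint (R : realFieldType) (J : R -> R -> R) : Prop :=
  forall a1 a2 b1 b2 t, 0 <= t <= 1 ->
    J (t * a1 + (1 - t) * a2) (t * b1 + (1 - t) * b2) <= Num.max (J a1 b1) (J a2 b2).

(* Main.v *)
Require Import Defs.
From mathcomp Require Import all_boot all_order all_algebra.
From mathcomp Require Import ring lra.
From Stdlib Require Import FunctionalExtensionality.
Import Order.TTheory GRing.Theory Num.Theory.
Local Open Scope ring_scope.

Section S.
Variables (R : realFieldType) (D X : finType).

Lemma lin2 (I : finType) (F G : I -> R) t s :
  t * \sum_i F i + s * \sum_i G i = \sum_i (t * F i + s * G i).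
Proof. by rewrite big_split -!mulr_sumr. Qed.

Lemma valid_mix (M1 M2 : mapping R D X) t :
  valid_cond M1 -> valid_cond M2 -> 0 <= t <= 1 -> valid_cond (mix_map t M1 M2).
Proof.
move=> V1 V2 /andP[t0 t1] d x y; have [P1 S1] := V1 d x y; have [P2 S2] := V2 d x y.
split.
  by move=> xh yh; rewrite /mix_map addr_ge0 // mulr_ge0 // subr_ge0.
rewrite /mix_map.
transitivity (t * \sum_(xh : X) \sum_(yh : bool) M1 d x y xh yh +
   (1 - t) * \sum_(xh : X) \sum_(yh : bool) M2 d x y xh yh); last by rewrite S1 S2; ring.
rewrite lin2; apply: eq_bigr => xh _; by rewrite lin2.
Qed.

Lemma ii_mix delta c (M1 M2 : mapping R D X) t :
  constr_ii delta c M1 -> constr_ii delta c M2 -> 0 <= t <= 1 ->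
  constr_ii delta c (mix_map t M1 M2).
Proof.
move=> C1 C2 /andP[t0 t1] d x y.
have -> : \sum_(xh : X) \sum_(yh : bool) mix_map t M1 M2 d x y xh yh * delta (x, y) (xh, yh)
  = t * (\sum_(xh : X) \sum_(yh : bool) M1 d x y xh yh * delta (x, y) (xh, yh)) +
    (1 - t) * (\sum_(xh : X) \sum_(yh : bool) M2 d x y xh yh * delta (x, y) (xh, yh)).
  rewrite lin2; apply: eq_bigr => xh _; rewrite lin2; apply: eq_bigr => yh _.
  rewrite /mix_map; ring.
have h1 := C1 d x y; have h2 := C2 d x y.
have t1' : 0 <= 1 - t by rewrite subr_ge0.
apply: le_trans (_ : t * c d x y + (1 - t) * c d x y <= _); last by rewrite -mulrDl subrKC mul1r.
by rewrite lerD // ler_wpM2l.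
Qed.

Lemma pYhgD_mix p (M1 M2 : mapping R D X) t y d :
  pYhgD p (mix_map t M1 M2) y d = t * pYhgD p M1 y d + (1 - t) * pYhgD p M2 y d.
Proof.
rewrite /pYhgD lin2; apply: eq_bigr => xh _; rewrite lin2; apply: eq_bigr => x _.
rewrite lin2; apply: eq_bigr => y' _; rewrite /mix_map; ring.
Qed.

Lemma phat_mix p (M1 M2 : mapping R D X) t :
  phat p (mix_map t M1 M2) = mix_XY t (phat p M1) (phat p M2).
Proof.
apply: functional_extensionality => xh; apply: functional_extensionality => yh.
rewrite /phat /mix_XY lin2; apply: eq_bigr => d _; rewrite lin2; apply: eq_bigr => x _.
rewrite lin2; apply: eq_bigr => y' _; rewrite /mix_map; ring.
Qed.

Lemma phat_pmf p (M : mapping R D X) : is_pmf_DXY p -> valid_cond M -> is_pmf_XY (phat p M).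
Proof.
move=> [P0 P1] V; split.
  move=> xh yh; apply: sumr_ge0 => d _; apply: sumr_ge0 => x _; apply: sumr_ge0 => y _.
  by rewrite mulr_ge0 // (proj1 (V d x y)).
rewrite -P1 /phat.
under eq_bigr => xh _ do rewrite exchange_big.
rewrite exchange_big.
under eq_bigr => d _ do under eq_bigr => xh _ do rewrite exchange_big.
under eq_bigr => d _ do rewrite exchange_big.
under eq_bigr => d _ do under eq_bigr => x _ do under eq_bigr => xh _ do rewrite exchange_big.
under eq_bigr => d _ do under eq_bigr => x _ do rewrite exchange_big.
apply: eq_bigr => d _; apply: eq_bigr => x _; apply: eq_bigr => y _.
transitivity (p d x y * \sum_(xh : X) \sum_(yh : bool) M d x y xh yh); last by rewrite (proj2 (V d x y)) mulr1.
by rewrite mulr_sumr; apply: eq_bigr => xh _; rewrite mulr_sumr.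
Qed.

Lemma pXY_pmf (p : D -> X -> bool -> R) : is_pmf_DXY p -> is_pmf_XY (pXY p).
Proof.
move=> [P0 P1]; split.
  by move=> x y; apply: sumr_ge0 => d _.
rewrite -P1 /pXY.
under eq_bigr => x _ do rewrite exchange_big.
by rewrite exchange_big.
Qed.

End S.

Theorem proposition1 (R : realFieldType) (D X : finType)
  (p : D -> X -> bool -> R) (pYT : bool -> R)
  (delta : X * bool -> X * bool -> R)
  (eps : bool -> D -> R) (eps2 : bool -> D -> D -> R) (c : D -> X -> bool -> R)
  (Delta : (X -> bool -> R) -> (X -> bool -> R) -> R) (J : R -> R -> R) :
  is_pmf_DXY p -> is_pmf_Y pYT ->
  (forall a b, 0 <= delta a b) -> (forall a, delta a a = 0) ->
  (* original constraint (i) *)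
  (Delta_convex1 Delta -> J_quasiconvex1 J ->
     convex_problem (feasible1 p pYT J eps delta c) (objective Delta p)) /\
  (Delta_quasiconvex1 Delta -> J_quasiconvex1 J ->
     quasiconvex_problem (feasible1 p pYT J eps delta c) (objective Delta p)) /\
  (* constraint (i) replaced by (i') *)
  (Delta_convex1 Delta -> J_quasiconvex_joint J ->
     convex_problem (feasible2 p J eps2 delta c) (objective Delta p)) /\
  (Delta_quasiconvex1 Delta -> J_quasiconvex_joint J ->
     quasiconvex_problem (feasible2 p J eps2 delta c) (objective Delta p)).
Proof.
move=> Pp _ _ _.
have S1 : J_quasiconvex1 J -> convex_set_map (feasible1 p pYT J eps delta c).
  move=> HJ M1 M2 t [i1 [ii1 v1]] [i2 [ii2 v2]] t01; split; last split.
  - move=> d y; rewrite pYhgD_mix; apply: le_trans (HJ _ _ _ _ t01) _.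
    by rewrite ge_max i1 i2.
  - exact: ii_mix.
  - exact: valid_mix.
have S2 : J_quasiconvex_joint J -> convex_set_map (feasible2 p J eps2 delta c).
  move=> HJ M1 M2 t [i1 [ii1 v1]] [i2 [ii2 v2]] t01; split; last split.
  - move=> d1 d2 y; rewrite !pYhgD_mix; apply: le_trans (HJ _ _ _ _ _ t01) _.
    by rewrite ge_max i1 i2.
  - exact: ii_mix.
  - exact: valid_mix.
have O1 : forall F, Delta_convex1 Delta -> (forall M, F M -> valid_cond M) ->
    convex_on_map F (objective Delta p).
  move=> F HD HF M1 M2 t f1 f2 t01; rewrite /objective phat_mix.
  by apply: HD => //; [apply: phat_pmf => //; apply: HF | apply: phat_pmf => //; apply: HF
                      | apply: pXY_pmf].
have O2 : forall F, Delta_quasiconvex1 Delta -> (forall M, F M -> valid_cond M) ->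
    quasiconvex_on_map F (objective Delta p).
  move=> F HD HF M1 M2 t f1 f2 t01; rewrite /objective phat_mix.
  by apply: HD => //; [apply: phat_pmf => //; apply: HF | apply: phat_pmf => //; apply: HF
                      | apply: pXY_pmf].
split; [|split; [|split]] => HD HJ; split; try by [apply: S1 | apply: S2].
- by apply: O1 => // M [_ []].
- by apply: O2 => // M [_ []].
- by apply: O1 => // M [_ []].
- by apply: O2 => // M [_ []].
Qed.
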